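(* Let $A=\mathbb{C}[x_1,\dots,x_M,\xi_1,\dots,\xi_N]$ be the free commutative superalgebra on even variables $x_1,\dots,x_M$ and odd variables $\xi_1,\dots,\xi_N$, and let $A^\circ=\mathbb{C}[x_1,\dots,x_M]$ be its quotient by the ideal generated by the odd variables. Let $q_1,\dots,q_n\in A$ be even elements with images $q_1^\circ,\dots,q_n^\circ\in A^\circ$. Assume: whenever $f_1^\circ,\dots,f_n^\circ\in A^\circ$ satisfy $\sum_i q_i^\circ f_i^\circ=0$, there exist $F^\circ_{ij}\in A^\circ$ with $F^\circ_{ij}=-F^\circ_{ji}$ and $f_i^\circ=\sum_jF^\circ_{ij}q_j^\circ$ for all $i$. Then whenever $f_1,\dots,f_n\in A$ satisfy $\sum_iq_if_i=0$, there exist $F_{ij}\in A$ with $F_{ij}=-F_{ji}$ ($i,j=1,\dots,n$) and $f_i=\sum_jF_{ij}q_j$ for all $i$. *)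

(* Defs.v *)
From HB Require Import structures.
From mathcomp Require Import all_boot all_order all_algebra.
From mathcomp Require Import complex.
From mathcomp Require Import Rstruct.
From mathcomp Require Import mpoly.
From Stdlib Require Reals.

Set Implicit Arguments.
Unset Strict Implicit.
Unset Printing Implicit Defensive.

Import Order.TTheory GRing.Theory Num.Theory.
Local Open Scope ring_scope.

Definition CC : Type := complex Rdefinitions.R.

Definition Aev (M : nat) := {mpoly CC[M]}.

(* The free commutative superalgebra A = C[x_1..x_M, xi_1..xi_N]:
   an element is written uniquely as  sum_{S subset {1..N}} a_S xi_S,
   where xi_S = xi_{s_1} ... xi_{s_k} with s_1 < ... < s_k and a_S in A°. *)
Definition SA (M N : nat) := {ffun {set 'I_N} -> Aev M}.

(* sign of xi_T xi_U = sgn * xi_{T cup U} for disjoint T, U: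
   number of pairs (t,u) in T x U with u < t. *)
Definition ssign (N : nat) (T U : {set 'I_N}) : nat :=
  #|[set p : 'I_N * 'I_N | [&& p.1 \in T, p.2 \in U & (p.2 < p.1)%N]]|.

(* supercommutative multiplication: xi_i xi_j = - xi_j xi_i, xi_i^2 = 0. *)
Definition smul (M N : nat) (a b : SA M N) : SA M N :=
  [ffun S : {set 'I_N} => \sum_(T : {set 'I_N} | T \subset S)
      (-1) ^+ ssign T (S :\: T) * (a T * b (S :\: T))].

Definition sred (M N : nat) (a : SA M N) : Aev M := a set0.

Definition seven (M N : nat) (a : SA M N) : Prop :=
  forall S : {set 'I_N}, odd #|S| -> a S = 0.

(* Main.v *)
Require Import Defs.
From HB Require Import structures.
From mathcomp Require Import all_boot all_order all_algebra.
From mathcomp Require Import complex Rstruct mpoly.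
From mathcomp Require Import zify ring.
Import GRing.Theory Num.Theory.
Local Open Scope ring_scope.

Section S.
Variables (M N : nat).
Implicit Types (A B C T U V S : {set 'I_N}).

Lemma ssignE T U : ssign T U = (\sum_(t in T) \sum_(u in U) ((u < t)%N : nat))%N.
Proof.
rewrite /ssign -sum1_card.
rewrite (eq_bigl (fun p : 'I_N * 'I_N => (p.1 \in T) && ((p.2 \in U) && (p.2 < p.1)%N))); last first.
  by move=> p; rewrite inE.
rewrite -(pair_big_dep (fun t => t \in T) (fun t u => (u \in U) && (u < t)%N) (fun _ _ => 1%N)) /=.
apply: eq_bigr => t _; rewrite big_mkcondr /=; apply: eq_bigr => u _.
by case: (u < t)%N.
Qed.

Lemma sumU A B (F : 'I_N -> nat) : [disjoint A & B] ->
  (\sum_(i in A :|: B) F i = \sum_(i in A) F i + \sum_(i in B) F i)%N.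
Proof. by move=> d; rewrite -bigU //; apply: eq_bigl => i; rewrite !inE. Qed.

Lemma ssignUl A B C : [disjoint A & B] -> ssign (A :|: B) C = (ssign A C + ssign B C)%N.
Proof. by move=> d; rewrite !ssignE sumU. Qed.

Lemma ssignUr A B C : [disjoint A & B] -> ssign C (A :|: B) = (ssign C A + ssign C B)%N.
Proof. by move=> d; rewrite !ssignE -big_split; apply: eq_bigr => t _; rewrite sumU. Qed.

Lemma ssign_swap T U : [disjoint T & U] -> (ssign T U + ssign U T = #|T| * #|U|)%N.
Proof.
move=> d; rewrite !ssignE [X in (_ + X)%N]exchange_big -big_split /=.
rewrite -sum_nat_const; apply: eq_bigr => t tT.
rewrite -big_split -sum1_card /=; apply: eq_bigr => u uU.
have : t != u by apply/eqP => e; move: (disjointFr d tT); rewrite e uU.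
rewrite -(inj_eq val_inj) /=; case: ltngtP => //.
Qed.

Implicit Types (a b c : SA M N).

Lemma smulE a b S : smul a b S = \sum_(T : {set 'I_N} | T \subset S)
      (-1) ^+ ssign T (S :\: T) * (a T * b (S :\: T)).
Proof. by rewrite ffunE. Qed.

Lemma smulDl a b c : smul (a + b) c = smul a c + smul b c.
Proof.
apply/ffunP => S; rewrite !ffunE -big_split; apply: eq_bigr => T _.
by rewrite !ffunE mulrDl mulrDr.
Qed.

Lemma smulDr a b c : smul a (b + c) = smul a b + smul a c.
Proof.
apply/ffunP => S; rewrite !ffunE -big_split; apply: eq_bigr => T _.
by rewrite !ffunE mulrDr mulrDr.
Qed.

Lemma smul0l b : smul 0 b = 0.
Proof. apply/ffunP => S; rewrite !ffunE big1 // => T _; by rewrite ffunE mul0r mulr0. Qed.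

Lemma smul0r b : smul b 0 = 0.
Proof. apply/ffunP => S; rewrite !ffunE big1 // => T _; by rewrite ffunE mulr0 mulr0. Qed.

Lemma smulNl a b : smul (- a) b = - smul a b.
Proof.
apply/ffunP => S; rewrite !ffunE -sumrN; apply: eq_bigr => T _.
by rewrite !ffunE mulNr mulrN.
Qed.

Lemma smulNr a b : smul a (- b) = - smul a b.
Proof.
apply/ffunP => S; rewrite !ffunE -sumrN; apply: eq_bigr => T _.
by rewrite !ffunE mulrN mulrN.
Qed.

Lemma smul_suml (I : Type) (r : seq I) (P : pred I) (F : I -> SA M N) b :
  smul (\sum_(i <- r | P i) F i) b = \sum_(i <- r | P i) smul (F i) b.
Proof. exact: (big_morph (fun x => smul x b) (fun x y => smulDl x y b) (smul0l b)). Qed.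

Lemma smul_sumr (I : Type) (r : seq I) (P : pred I) (F : I -> SA M N) b :
  smul b (\sum_(i <- r | P i) F i) = \sum_(i <- r | P i) smul b (F i).
Proof. exact: (big_morph (fun x => smul b x) (fun x y => smulDr b x y) (smul0r b)). Qed.

Lemma disjointD T S : [disjoint T & S :\: T].
Proof.
rewrite -setI_eq0; apply/eqP/setP => x; rewrite !inE.
by case: (x \in T); rewrite ?andbF.
Qed.

Lemma setDDK T S : T \subset S -> S :\: (S :\: T) = T.
Proof. by move=> sTS; rewrite setDDr setDv set0U; apply/setIidPr. Qed.

Lemma smulC a b : seven a -> smul a b = smul b a.
Proof.
move=> ea; apply/ffunP => S; rewrite !ffunE.
rewrite [RHS](reindex_onto (fun T => S :\: T) (fun T => S :\: T)); last first.
  by move=> T sTS; rewrite setDDK.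
apply: eq_big => [T|T sTS].
  apply/idP/idP => [sTS|/andP[_ /eqP <-]]; last exact: subsetDl.
  by rewrite subsetDl setDDK ?eqxx.
rewrite setDDK //.
case oT: (odd #|T|); first by rewrite (ea T oT) !(mul0r, mulr0).
have e := ssign_swap T (S :\: T) (disjointD T S).
have -> : ((-1) ^+ ssign T (S :\: T) = (-1) ^+ ssign (S :\: T) T :> Aev M).
  rewrite -signr_odd -[RHS]signr_odd; congr (_ ^+ _).
  move: (congr1 odd e); rewrite oddD oddM oT /=.
  by case: (odd (ssign T _)); case: (odd (ssign _ T)).
by rewrite [b _ * _]mulrC.
Qed.

Lemma setDUK A B : A \subset B -> A :|: (B :\: A) = B.
Proof.
move=> sAB; apply/setP => x; rewrite !inE.
by case: (boolP (x \in A)) => xA //=; rewrite (subsetP sAB).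
Qed.

Lemma sgA (x y z : Aev M) m n p r : (m + n = p + r)%N ->
  (-1)^+m * (x * ((-1)^+n * (y * z))) = (-1)^+p * (((-1)^+r * (x * y)) * z).
Proof.
move=> e.
have E : (-1)^+m * (-1)^+n = (-1)^+p * (-1)^+r :> Aev M by rewrite -!exprD e.
transitivity ((-1)^+m * (-1)^+n * (x*y*z)); first by rewrite -!mulrA; congr (_ * _); rewrite mulrCA !mulrA.
by rewrite E -!mulrA; congr (_ * _); rewrite mulrCA !mulrA [_ * (-1) ^+ r]mulrC.
Qed.

Lemma smulA a b c : smul a (smul b c) = smul (smul a b) c.
Proof.
apply/ffunP=> S; rewrite !ffunE.
under eq_bigr => T _ do rewrite ffunE mulr_sumr mulr_sumr.
under [RHS]eq_bigr => W _ do rewrite ffunE mulr_suml mulr_sumr.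
rewrite [RHS](exchange_big_dep (fun T => T \subset S)) /=; last first.
  by move=> W T sWS sTW; exact: subset_trans sTW sWS.
apply: eq_bigr => T sTS.
rewrite [RHS](reindex_onto (fun U => T :|: U) (fun W => W :\: T)) /=; last first.
  by move=> W /andP[_ sTW]; rewrite setDUK.
apply: eq_big => [U | U hU].
  rewrite subsetD subUset sTS subsetUl /= setDUl setDv set0U.
  by rewrite andbT (sameP setDidPl eqP).
move: (hU); rewrite subsetD => /andP[sUS dUT].
have -> : (T :|: U) :\: T = U by rewrite setDUl setDv set0U; apply/setDidPl.
rewrite -setDDl; apply: sgA.
have dTU : [disjoint T & U] by rewrite disjoint_sym.
rewrite ssignUl //.
rewrite -{1}(setDUK _ _ hU) ssignUr ?disjointD //.
lia.
Qed.
End S.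
Arguments smulC {M N} a b.
Arguments smul0l {M N} b.
Set Implicit Arguments.
Unset Strict Implicit.

Lemma ssign0l N (S : {set 'I_N}) : ssign set0 S = 0%N.
Proof. by rewrite ssignE big_set0. Qed.
Lemma ssign0r N (S : {set 'I_N}) : ssign S set0 = 0%N.
Proof. by rewrite ssignE big1 // => t _; rewrite big_set0. Qed.

Lemma SA_eqN M N (x : SA M N) : x = - x -> x = 0.
Proof.
move=> e; apply/ffunP => S; have := congr1 (fun y : SA M N => y S) e.
rewrite /= !ffunE => h.
have h2 : x S *+ 2 = 0 by rewrite mulr2n {1}h addNr.
have : (2%:R : CC) *: x S = 0 by rewrite scaler_nat.
by move/eqP; rewrite scaler_eq0 pnatr_eq0 /= => /eqP.
Qed.

Definition Pk M N n (q : 'I_n -> SA M N) k :=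
  forall f : 'I_n -> SA M N, (forall i (S : {set 'I_N}), (#|S| < k)%N -> f i S = 0) ->
    \sum_(i < n) smul (q i) (f i) = 0 ->
    exists F : 'I_n -> 'I_n -> SA M N,
      (forall i j, F i j = - F j i) /\
      (forall i, f i = \sum_(j < n) smul (F i j) (q j)).

Lemma Pk_base M N n (q : 'I_n -> SA M N) : Pk q N.+1.
Proof.
move=> f lowf _; exists (fun _ _ => 0); split; first by move=> *; rewrite oppr0.
move=> i; rewrite big1 => [|j _]; last exact: smul0l.
apply/ffunP => S; rewrite ffunE lowf //.
by rewrite ltnS; apply: leq_trans (max_card _) _; rewrite card_ord.
Qed.

Lemma Pk_step M N n (q : 'I_n -> SA M N) k :
  (forall i, seven (q i)) ->
  (forall f0 : 'I_n -> Aev M,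
      \sum_(i < n) sred (q i) * f0 i = 0 ->
      exists F0 : 'I_n -> 'I_n -> Aev M,
        (forall i j, F0 i j = - F0 j i) /\
        (forall i, f0 i = \sum_(j < n) F0 i j * sred (q j))) ->
  Pk q k.+1 -> Pk q k.
Proof.
move=> hq hyp IH f lowf sumf.
have key : forall S : {set 'I_N}, #|S| = k -> \sum_(i < n) sred (q i) * f i S = 0.
  move=> S cS; have := congr1 (fun x : SA M N => x S) sumf.
  rewrite /= sum_ffunE ffunE => h; rewrite -[RHS]h; apply: eq_bigr => i _.
  rewrite smulE (bigD1 set0) ?sub0set //= big1 ?addr0.
    by rewrite ssign0l expr0 mul1r setD0.
  move=> T /andP[sTS nT0]; rewrite lowf ?mulr0 //.
  rewrite cardsD (setIidPr sTS); move: (subset_leq_card sTS).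
  have : (0 < #|T|)%N by rewrite card_gt0.
  lia.
have HF : forall S : {set 'I_N}, exists F0 : 'I_n -> 'I_n -> Aev M, #|S| = k ->
    (forall i j, F0 i j = - F0 j i) /\ (forall i, f i S = \sum_(j < n) F0 i j * sred (q j)).
  move=> S; case: (eqVneq #|S| k) => cS.
    by have [F0 [h1 h2]] := hyp _ (key S cS); exists F0.
  by exists (fun _ _ => 0) => e; rewrite e eqxx in cS.
have [F0 hF0] := fin_all_exists HF.
pose G (i j : 'I_n) : SA M N := [ffun S : {set 'I_N} => if #|S| == k then F0 S i j else 0].
have Gq : forall i j (S : {set 'I_N}), (#|S| <= k)%N ->
    smul (G i j) (q j) S = if #|S| == k then F0 S i j * sred (q j) else 0.
  move=> i j S cS; rewrite smulE (bigD1 S) //= big1 ?addr0.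
    rewrite ffunE setDv ssign0r expr0 mul1r.
    by case: (#|S| == k); rewrite ?mul0r.
  move=> T /andP[sTS nTS]; rewrite ffunE.
  have : (#|T| < #|S|)%N by apply: proper_card; rewrite properEneq nTS.
  case: eqP => [e|_]; first by move: cS; rewrite -e; lia.
  by rewrite mul0r mulr0.
pose f' i := f i - \sum_(j < n) smul (G i j) (q j).
have low' : forall i (S : {set 'I_N}), (#|S| < k.+1)%N -> f' i S = 0.
  move=> i S cS; rewrite /f' !ffunE sum_ffunE.
  under eq_bigr => j _ do rewrite Gq //.
  case: (eqVneq #|S| k) => cSk.
    by rewrite -(proj2 (hF0 S cSk) i) subrr.
  rewrite lowf; last by rewrite ltn_neqAle cSk -ltnS.
  by rewrite big1 ?subr0.
have sum' : \sum_(i < n) smul (q i) (f' i) = 0.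
  rewrite /f'.
  under eq_bigr => i _ do rewrite smulDr smulNr smul_sumr.
  rewrite big_split /= sumf add0r sumrN.
  pose Y i j := smul (G i j) (smul (q i) (q j)).
  have -> : \sum_(i < n) \sum_(j < n) smul (q i) (smul (G i j) (q j)) =
            \sum_(i < n) \sum_(j < n) Y i j.
    apply: eq_bigr => i _; apply: eq_bigr => j _.
    by rewrite /Y smulA (smulC _ _ (hq i)) -smulA.
  have YN : forall i j, Y i j = - Y j i.
    move=> i j; rewrite /Y (smulC (q i) (q j) (hq i)) -smulNl; congr smul.
    apply/ffunP => S; rewrite !ffunE.
    case: eqP => [c|_]; last by rewrite oppr0.
    exact: (proj1 (hF0 S c)).
  suff -> : \sum_(i < n) \sum_(j < n) Y i j = 0 by rewrite oppr0.
  apply: SA_eqN.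
  transitivity (\sum_(i < n) \sum_(j < n) - Y j i).
    by apply: eq_bigr => i _; apply: eq_bigr => j _; exact: YN.
  rewrite exchange_big /= -sumrN; apply: eq_bigr => j _; by rewrite sumrN.
have [F' [F'a F'e]] := IH f' low' sum'.
exists (fun i j => F' i j + G i j); split.
  move=> i j; rewrite F'a opprD; congr (_ + _).
  apply/ffunP => S; rewrite !ffunE.
  case: eqP => [c|_]; last by rewrite oppr0.
  exact: (proj1 (hF0 S c)).
move=> i.
under eq_bigr => j _ do rewrite smulDl.
by rewrite big_split /= -F'e /f' subrK.
Qed.

Theorem mainTheorem4 (M N n : nat) (q : 'I_n -> SA M N) :
  (forall i, seven (q i)) ->
  (forall f0 : 'I_n -> Aev M,
      \sum_(i < n) sred (q i) * f0 i = 0 ->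
      exists F0 : 'I_n -> 'I_n -> Aev M,
        (forall i j, F0 i j = - F0 j i) /\
        (forall i, f0 i = \sum_(j < n) F0 i j * sred (q j))) ->
  forall f : 'I_n -> SA M N,
    \sum_(i < n) smul (q i) (f i) = 0 ->
    exists F : 'I_n -> 'I_n -> SA M N,
      (forall i j, F i j = - F j i) /\
      (forall i, f i = \sum_(j < n) smul (F i j) (q j)).
Proof.
move=> hq hyp.
have all : forall m k, (k + m = N.+1)%N -> Pk q k.
  elim=> [|m IHm] k e.
    by rewrite addn0 in e; subst k; exact: Pk_base.
  by apply: Pk_step hq hyp _; apply: IHm; rewrite addSnnS.
move=> f sumf; apply: (all N.+1 0%N (add0n _)) sumf.
by move=> i S; rewrite ltn0.
Qed.
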